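(* Let $2<\alpha<4$ and $c\ge1$. For $N_1>0$ set $N_2=cN_1$, and let $(\Lambda_1^*,\Lambda_2^* )$ be the Nash equilibrium of the two-player Variable-Rate Random Access Game in which player $i\in\{1,2\}$ chooses $\Lambda_i\in[0,N_i]$ and receives payoff \[ U_i(\Lambda_1,\Lambda_2)=\Lambda_i\int_0^\infty e^{-(\Lambda_1+\Lambda_2)x^{2/\alpha}}\frac{dx}{1+x}. \] Then, in the limit $N_1\to\infty$, the equilibrium is \[ (\Lambda_1^*,\Lambda_2^* )=\begin{cases}(N_1,N_2), & N_1\le N_2\le \frac{2}{\alpha-2}N_1,\\[2pt] \left(N_1,\frac{2}{\alpha-2}N_1\right), & \frac{2}{\alpha-2}N_1\le N_2,\end{cases} \] in the sense that $\Lambda_1^*=N_1$ and $\Lambda_2^*/N_1\to\min\!\left(c,\frac{2}{\alpha-2}\right)$ as $N_1\to\infty$.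
   Context: A Nash equilibrium is a pair $(\Lambda_1^*,\Lambda_2^* )\in[0,N_1]\times[0,N_2]$ such that $\Lambda_1^*$ maximizes $U_1(\cdot,\Lambda_2^* )$ over $[0,N_1]$ and $\Lambda_2^*$ maximizes $U_2(\Lambda_1^*,\cdot)$ over $[0,N_2]$. *)

(* Defs.v *)
From Stdlib Require Import Reals.
From Coquelicot Require Import Coquelicot.
Open Scope R_scope.

(* Real power x^y for x >= 0 with the convention 0^y = 0 (y > 0 here). *)
Definition rpow (x y : R) : R := if Rle_dec x 0 then 0 else Rpower x y.

Definition Iint (alpha s : R) : R :=
  RInt_gen (fun x => exp (- s * rpow x (2 / alpha)) / (1 + x))
    (at_point 0) (Rbar_locally p_infty).

Definition U1 (alpha L1 L2 : R) : R := L1 * Iint alpha (L1 + L2).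
Definition U2 (alpha L1 L2 : R) : R := L2 * Iint alpha (L1 + L2).

Definition is_Nash (alpha N1 N2 L1s L2s : R) : Prop :=
  (0 <= L1s <= N1 /\ 0 <= L2s <= N2) /\
  (forall L1, 0 <= L1 <= N1 -> U1 alpha L1 L2s <= U1 alpha L1s L2s) /\
  (forall L2, 0 <= L2 <= N2 -> U2 alpha L1s L2 <= U2 alpha L1s L2s).

(* Main.v *)
Require Import Defs.
From Stdlib Require Import Reals Lra Classical.
From Coquelicot Require Import Coquelicot.
Open Scope R_scope.
Lemma rpow_ge0 x y : 0 <= rpow x y.
Proof. unfold rpow. destruct (Rle_dec x 0). lra. unfold Rpower. left; apply exp_pos. Qed.

Lemma rpow_pos x y : 0 < x -> rpow x y = Rpower x y.
Proof. intros. unfold rpow. destruct (Rle_dec x 0). lra. auto. Qed.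

Lemma rpow_cont x y : 0 < y -> 0 <= x -> continuity_pt (fun t => rpow t y) x.
Proof.
  intros Hy Hx. destruct Hx as [Hx|Hx].
  - apply (continuity_pt_locally_ext (fun t => Rpower t y) _ x x); auto.
    + intros t Ht. unfold Rdist in Ht. rewrite rpow_pos; auto.
      apply Rabs_def2 in Ht. lra.
    + apply derivable_continuous_pt. exists (y * Rpower x (y - 1)).
      apply derivable_pt_lim_power; auto.
  - subst x. apply continuity_pt_locally. intros eps.
    exists (mkposreal _ (exp_pos (ln eps / y))). intros u Hu.
    unfold ball in Hu; simpl in Hu; unfold AbsRing_ball, abs, minus, plus, opp in Hu; simpl in Hu.
    replace (rpow 0 y) with 0 by (unfold rpow; destruct (Rle_dec 0 0); lra).
    rewrite Rminus_0_r, Rabs_pos_eq by apply rpow_ge0.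
    unfold rpow. destruct (Rle_dec u 0). destruct eps; simpl; lra.
    unfold Rpower.
    assert (Hu2 : Rabs (u - 0) < exp (ln eps / y)) by exact Hu. rewrite Rminus_0_r in Hu2. clear Hu; rename Hu2 into Hu.
    apply Rabs_def2 in Hu. destruct Hu as [Hu _].
    assert (ln u < ln eps / y). { rewrite <- (ln_exp (ln eps / y)). apply ln_increasing; lra. }
    rewrite <- (exp_ln eps) by (destruct eps; simpl; lra).
    apply exp_increasing.
    apply Rmult_lt_compat_l with (r := y) in H; auto.
    field_simplify in H; lra.
Qed.
Definition fs (alpha s x : R) := exp (- s * rpow x (2 / alpha)) / (1 + x).

Lemma fs_cont alpha s x : 0 < alpha -> 0 <= x -> continuity_pt (fs alpha s) x.
Proof.
  intros Ha Hx. unfold fs.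
  apply (continuity_pt_div (fun x => exp (- s * rpow x (2 / alpha))) (fun x => 1 + x)).
  - apply (continuity_pt_comp (fun x => - s * rpow x (2 / alpha)) exp).
    + apply (continuity_pt_mult (fun _ => - s) (fun x => rpow x (2/alpha))).
      * apply continuity_pt_const. intros a b; auto.
      * apply rpow_cont; auto. apply Rdiv_lt_0_compat; lra.
    + apply derivable_continuous_pt, derivable_pt_exp.
  - apply (continuity_pt_plus (fun _ => 1) (fun x => x)).
    apply continuity_pt_const; intros a b; auto. apply continuity_pt_id.
  - lra.
Qed.

Lemma ex_RInt_cpt (g : R -> R) b : 0 <= b -> (forall x, 0 <= x -> continuity_pt g x) -> ex_RInt g 0 b.
Proof.
  intros Hb Hg. apply (ex_RInt_continuous (V:=R_CompleteNormedModule)). intros z Hz.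
  rewrite Rmin_left in Hz by lra. apply continuity_pt_filterlim. apply Hg. lra.
Qed.

Lemma fs_lin_cont alpha s lam : 0 < alpha -> 0 < lam -> forall x, 0 <= x -> continuity_pt (fun y => fs alpha s (lam * y)) x.
Proof.
  intros Ha Hl x Hx.
  apply (continuity_pt_comp (fun y => lam * y) (fs alpha s)).
  - apply (continuity_pt_mult (fun _ => lam) (fun y => y)).
    apply continuity_pt_const; intros a b; auto. apply continuity_pt_id.
  - apply fs_cont; auto. apply Rmult_le_pos; lra.
Qed.

Lemma scale_int alpha s lam b : 0 < alpha -> 0 < lam -> 0 <= b ->
  RInt (fs alpha s) 0 b = lam * RInt (fun y => fs alpha s (lam * y)) 0 (b / lam).
Proof.
  intros Ha Hl Hb.
  assert (H := RInt_comp_lin (fs alpha s) lam 0 0 (b / lam)).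
  replace (lam * 0 + 0) with 0 in H by ring.
  replace (lam * (b / lam) + 0) with b in H by (field; lra).
  rewrite <- H by (apply ex_RInt_cpt; auto; intros; apply fs_cont; auto).
  transitivity (RInt (fun y => scal lam (fs alpha s (lam*y))) 0 (b/lam)).
  { apply RInt_ext; intros; rewrite Rplus_0_r; reflexivity. }
  rewrite (RInt_scal (V:=R_CompleteNormedModule)). reflexivity.
  apply ex_RInt_cpt. apply Rdiv_le_0_compat; lra. apply fs_lin_cont; auto.
Qed.

Lemma rpow_scale lam y d : 0 < lam -> 0 <= y -> rpow (lam * y) d = Rpower lam d * rpow y d.
Proof.
  intros Hl Hy. destruct Hy as [Hy|Hy].
  - rewrite !rpow_pos; auto. symmetry; apply Rpower_mult_distr; auto. apply Rmult_lt_0_compat; auto.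
  - subst. rewrite Rmult_0_r. unfold rpow. destruct (Rle_dec 0 0); [ring|lra].
Qed.

Lemma fs_nonneg alpha s x : 0 <= x -> 0 <= fs alpha s x.
Proof. intros. unfold fs. apply Rdiv_le_0_compat. left; apply exp_pos. lra. Qed.
Lemma e_cont alpha x : 0 < alpha -> 0 <= x -> continuity_pt (fun y => exp (- rpow y (2/alpha))) x.
Proof.
  intros Ha Hx.
  apply (continuity_pt_comp (fun y => - rpow y (2 / alpha)) exp).
  - apply (continuity_pt_opp (fun y => rpow y (2/alpha))).
    apply rpow_cont; auto. apply Rdiv_lt_0_compat; lra.
  - apply derivable_continuous_pt, derivable_pt_exp.
Qed.

Lemma e_bound alpha y : 2 < alpha < 4 -> 0 <= y ->
  exp (- rpow y (2/alpha)) <= 1024 / ((1 + y) * (1 + y)).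
Proof.
  intros Ha Hy.
  destruct (Rle_lt_dec y 1) as [Hy1|Hy1].
  - apply Rle_trans with 1.
    + rewrite <- exp_0. apply exp_le_3 || idtac.
      destruct (Req_dec (- rpow y (2/alpha)) 0) as [E|E]. rewrite E; lra.
      left; apply exp_increasing. assert (H:=rpow_ge0 y (2/alpha)). lra.
    + apply Rle_div_r. nra. nra.
  - set (q := sqrt y).
    assert (Hq : 1 < q). { unfold q. rewrite <- sqrt_1. apply sqrt_lt_1; lra. }
    assert (Hqq : q * q = y). { unfold q. apply sqrt_sqrt. lra. }
    assert (Hrq : q <= rpow y (2/alpha)).
    { rewrite rpow_pos by lra. unfold q. rewrite <- Rpower_sqrt by lra.
      apply Rle_Rpower. lra. apply Rle_trans with (2/4). lra.
      unfold Rdiv. apply Rmult_le_compat_l. lra. apply Rinv_le_contravar; lra. }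
    assert (He4 : 1 + q/4 <= exp (q/4)) by apply exp_ineq1_le.
    assert (Heq : exp q = exp (q/4) * exp (q/4) * (exp (q/4) * exp (q/4))).
    { rewrite <- !exp_plus. f_equal. field. }
    assert (Hexpq : y * y / 256 <= exp q).
    { rewrite Heq. rewrite <- Hqq.
      assert (0 <= q/4) by lra.
      assert (q/4 * (q/4) <= exp (q/4) * exp (q/4)) by (apply Rmult_le_compat; lra).
      apply Rle_trans with ((q/4*(q/4)) * (q/4*(q/4))). right; field.
      apply Rmult_le_compat; nra. }
    apply Rle_trans with (exp (- q)).
    { destruct (Req_dec q (rpow y (2/alpha))) as [E|E]. rewrite E; lra.
      left; apply exp_increasing; lra. }
    rewrite exp_Ropp.
    apply Rle_trans with (256 / (y * y)).
    { rewrite <- (Rinv_inv (256 / (y*y))). apply Rinv_le_contravar.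
      apply Rinv_0_lt_compat. apply Rdiv_lt_0_compat; nra.
      rewrite Rinv_div. lra. }
    replace (256/(y*y)) with (256 * ((1+y)*(1+y)) / ((y*y)*((1+y)*(1+y)))) by (field; nra).
    replace (1024/((1+y)*(1+y))) with (1024 * (y*y) / ((y*y)*((1+y)*(1+y)))) by (field; nra).
    unfold Rdiv. apply Rmult_le_compat_r. left; apply Rinv_0_lt_compat; nra. nra.
Qed.

Lemma int_e_bound alpha c : 2 < alpha < 4 -> 0 <= c ->
  RInt (fun y => exp (- rpow y (2/alpha))) 0 c <= 1024.
Proof.
  intros Ha Hc.
  assert (Hg : is_RInt (fun y => 1024 / ((1 + y) * (1 + y))) 0 c
                 (minus ((fun y => - 1024 / (1 + y)) c) ((fun y => - 1024 / (1 + y)) 0))).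
  { apply (is_RInt_derive (V:=R_CompleteNormedModule) (fun y => -1024/(1+y)) (fun y => 1024/((1+y)*(1+y)))).
    - intros x Hx. rewrite Rmin_left, Rmax_right in Hx by lra.
      auto_derive. lra. field. lra.
    - intros x Hx. rewrite Rmin_left, Rmax_right in Hx by lra.
      apply continuity_pt_filterlim.
      apply (continuity_pt_div (fun _ => 1024) (fun y => (1+y)*(1+y))).
      apply continuity_pt_const; intros a b; auto.
      assert (Hc1 : continuity_pt (fun y => 1+y) x).
      { apply (continuity_pt_plus (fun _ => 1) (fun y => y)).
        apply continuity_pt_const; intros a b; auto. apply continuity_pt_id. }
      apply (continuity_pt_mult (fun y => 1+y) (fun y => 1+y)); exact Hc1.
      nra. }
  apply Rle_trans with (RInt (fun y => 1024 / ((1 + y) * (1 + y))) 0 c).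
  - apply RInt_le; auto.
    + apply ex_RInt_cpt; auto. intros; apply e_cont; lra.
    + eexists; exact Hg.
    + intros x Hx. apply e_bound; lra.
  - rewrite (is_RInt_unique _ _ _ _ Hg). simpl. unfold minus, plus, opp; simpl.
    assert (0 < 1024 / (1 + c)) by (apply Rdiv_lt_0_compat; lra).
    replace (-1024 / (1 + 0)) with (-1024) by field. 
    unfold Rdiv in *. lra.
Qed.
Lemma igen (f : R -> R) (M : R) :
  (forall x, 0 <= x -> 0 <= f x) ->
  (forall b, 0 <= b -> ex_RInt f 0 b) ->
  (forall b, 0 <= b -> RInt f 0 b <= M) ->
  (forall b, 0 <= b -> RInt f 0 b <= RInt_gen f (at_point 0) (Rbar_locally p_infty)) /\
  (forall M', (forall b, 0 <= b -> RInt f 0 b <= M') ->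
      RInt_gen f (at_point 0) (Rbar_locally p_infty) <= M').
Proof.
  intros Hpos Hex Hb.
  set (E := fun y => exists b, 0 <= b /\ y = RInt f 0 b).
  assert (HE : bound E) by (exists M; intros y [b [H0 ->]]; auto).
  assert (HE1 : exists x, E x) by (exists (RInt f 0 0); exists 0; split; lra).
  destruct (completeness E HE HE1) as [l [Hub Hlub]].
  assert (mono : forall b b', 0 <= b <= b' -> RInt f 0 b <= RInt f 0 b').
  { intros b b' Hbb.
    assert (Hex2 : ex_RInt f b b').
    { apply (ex_RInt_Chasles_2 f 0). lra. apply Hex. lra. }
    rewrite <- (RInt_Chasles f 0 b b'); auto. 2: apply Hex; lra.
    assert (0 <= RInt f b b').
    { apply RInt_ge_0; try lra; auto. intros x Hx; apply Hpos; lra. }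
    change (plus (RInt f 0 b) (RInt f b b')) with (RInt f 0 b + RInt f b b'). lra. }
  assert (Hgen : is_RInt_gen f (at_point 0) (Rbar_locally p_infty) l).
  { intros P [eps Heps].
    assert (exists b0, 0 <= b0 /\ l - eps < RInt f 0 b0).
    { apply NNPP; intro Hn.
      assert (is_upper_bound E (l - eps)).
      { intros y [b [Hb0 ->]]. apply Rnot_lt_le. intro Hlt. apply Hn. exists b; auto. }
      specialize (Hlub _ H). destruct eps; simpl in *; lra. }
    destruct H as [b0 [Hb0 Hlt]].
    apply (Filter_prod _ _ _ (fun x => x = 0) (fun y => b0 < y)).
    - reflexivity.
    - exists b0; auto.
    - intros x y -> Hy. simpl. exists (RInt f 0 y). split.
      + apply (RInt_correct (V:=R_CompleteNormedModule)), Hex. lra.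
      + apply Heps. assert (RInt f 0 y <= l) by (apply Hub; exists y; split; auto; lra).
        assert (RInt f 0 b0 <= RInt f 0 y) by (apply mono; lra).
        unfold ball; simpl; unfold AbsRing_ball, abs, minus, plus, opp; simpl.
        apply Rabs_def1; lra. }
  rewrite (is_RInt_gen_unique _ _ Hgen).
  split.
  - intros b Hb0. apply Hub. exists b; auto.
  - intros M' HM'. apply Hlub. intros y [b [Hb0 ->]]. auto.
Qed.
Lemma Iint_fs alpha s : Iint alpha s = RInt_gen (fs alpha s) (at_point 0) (Rbar_locally p_infty).
Proof. reflexivity. Qed.

Lemma Rpower_pos x y : 0 < Rpower x y.
Proof. unfold Rpower; apply exp_pos. Qed.

Lemma Iint_props alpha s : 2 < alpha < 4 -> 0 < s ->
  (forall b, 0 <= b -> RInt (fs alpha s) 0 b <= Iint alpha s) /\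
  (forall M', (forall b, 0 <= b -> RInt (fs alpha s) 0 b <= M') -> Iint alpha s <= M').
Proof.
  intros Ha Hs. rewrite Iint_fs.
  set (k := Rpower s (-(alpha/2))).
  assert (Hk : 0 < k) by apply Rpower_pos.
  assert (Hsk : s * Rpower k (2/alpha) = 1).
  { unfold k. rewrite Rpower_mult. replace (- (alpha/2) * (2/alpha)) with (Ropp 1) by (field; lra).
    rewrite Rpower_Ropp, Rpower_1 by auto. field; lra. }
  apply (igen _ (k * 1024)).
  - intros; apply fs_nonneg; auto.
  - intros; apply ex_RInt_cpt; auto. intros; apply fs_cont; auto; lra.
  - intros b Hb. rewrite (scale_int alpha s k b) by (auto; lra).
    apply Rmult_le_compat_l. lra.
    apply Rle_trans with (RInt (fun y => exp (- rpow y (2/alpha))) 0 (b / k)).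
    + apply RInt_le. apply Rdiv_le_0_compat; lra.
      apply ex_RInt_cpt. apply Rdiv_le_0_compat; lra. apply fs_lin_cont; lra.
      apply ex_RInt_cpt. apply Rdiv_le_0_compat; lra. intros; apply e_cont; lra.
      intros x Hx. unfold fs. rewrite rpow_scale by lra.
      replace (- s * (Rpower k (2 / alpha) * rpow x (2 / alpha))) with (- rpow x (2/alpha))
        by (rewrite <- Rmult_assoc, <- Ropp_mult_distr_l, Hsk; ring).
      unfold Rdiv. apply Rle_trans with (exp (- rpow x (2/alpha)) * 1); [|lra]. apply Rmult_le_compat_l.
      left; apply exp_pos. rewrite <- Rinv_1. apply Rinv_le_contravar. lra. nra.
    + apply int_e_bound; auto. apply Rdiv_le_0_compat; lra.
Qed.

Lemma Iint_pos alpha s : 2 < alpha < 4 -> 0 < s -> 0 < Iint alpha s.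
Proof.
  intros Ha Hs. destruct (Iint_props alpha s Ha Hs) as [H1 _].
  apply Rlt_le_trans with (RInt (fs alpha s) 0 1); [|apply H1; lra].
  apply Rlt_le_trans with (RInt (fun _ => exp (- s) / 2) 0 1).
  - rewrite RInt_const. change (scal (1 - 0) (exp (-s) / 2)) with ((1 - 0) * (exp (-s) / 2)).
    assert (H := exp_pos (-s)). lra.
  - apply RInt_le. lra. apply ex_RInt_const.
    apply ex_RInt_cpt. lra. intros; apply fs_cont; auto; lra.
    intros x Hx. unfold fs. rewrite rpow_pos by lra.
    assert (Hr : Rpower x (2/alpha) <= 1).
    { unfold Rpower. rewrite <- exp_0. 
      assert (ln x < 0) by (rewrite <- ln_1; apply ln_increasing; lra).
      assert (0 < 2/alpha) by (apply Rdiv_lt_0_compat; lra).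
      left; apply exp_increasing. nra. }
    set (r := Rpower x (2/alpha)) in *.
    unfold Rdiv. apply Rmult_le_compat.
    left; apply exp_pos. left; apply Rinv_0_lt_compat; lra.
    destruct (Req_dec r 1) as [E|E].
    rewrite E; right; f_equal; ring.
    left; apply exp_increasing. nra.
    apply Rinv_le_contravar; lra.
Qed.

Lemma phi_mono alpha s t : 2 < alpha < 4 -> 0 < s -> s <= t ->
  Rpower s (alpha/2) * Iint alpha s <= Rpower t (alpha/2) * Iint alpha t.
Proof.
  intros Ha Hs Hst.
  assert (Ht : 0 < t) by lra.
  set (lam := Rpower (t/s) (alpha/2)).
  assert (Hl1 : 1 <= lam).
  { unfold lam. rewrite <- (Rpower_O (t/s)) by (apply Rdiv_lt_0_compat; lra).
    apply Rle_Rpower. apply (Rmult_le_reg_r s); [lra|]. field_simplify; lra. lra. }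
  assert (Hsl : s * Rpower lam (2/alpha) = t).
  { unfold lam. rewrite Rpower_mult. replace (alpha/2 * (2/alpha)) with 1 by (field; lra).
    rewrite Rpower_1 by (apply Rdiv_lt_0_compat; lra). field; lra. }
  assert (Hpow : Rpower s (alpha/2) * lam = Rpower t (alpha/2)).
  { unfold lam. rewrite Rpower_mult_distr by (try apply Rdiv_lt_0_compat; lra). f_equal. field; lra. }
  destruct (Iint_props alpha s Ha Hs) as [_ H2].
  destruct (Iint_props alpha t Ha Ht) as [H3 _].
  assert (Iint alpha s <= lam * Iint alpha t).
  { apply H2. intros b Hb. rewrite (scale_int alpha s lam b) by (auto; lra).
    apply Rmult_le_compat_l. lra.
    apply Rle_trans with (RInt (fs alpha t) 0 (b / lam)).
    2: apply H3; apply Rdiv_le_0_compat; lra.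
    apply RInt_le. apply Rdiv_le_0_compat; lra.
    apply ex_RInt_cpt. apply Rdiv_le_0_compat; lra. apply fs_lin_cont; lra.
    apply ex_RInt_cpt. apply Rdiv_le_0_compat; lra. intros; apply fs_cont; lra.
    intros x Hx. unfold fs. rewrite rpow_scale by lra.
    replace (- s * (Rpower lam (2 / alpha) * rpow x (2 / alpha))) with (- t * rpow x (2/alpha))
        by (rewrite <- Rmult_assoc, <- (Ropp_mult_distr_l s), Hsl; ring).
    unfold Rdiv. apply Rmult_le_compat_l. left; apply exp_pos.
    apply Rinv_le_contravar. lra. nra. }
  rewrite <- Hpow. rewrite Rmult_assoc. apply Rmult_le_compat_l. left; apply Rpower_pos. lra.
Qed.

Lemma phi_bound alpha s : 2 < alpha < 4 -> 0 < s -> Rpower s (alpha/2) * Iint alpha s <= 1024.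
Proof.
  intros Ha Hs.
  set (k := Rpower s (-(alpha/2))).
  assert (Hk : 0 < k) by apply Rpower_pos.
  assert (Hsk : s * Rpower k (2/alpha) = 1).
  { unfold k. rewrite Rpower_mult. replace (- (alpha/2) * (2/alpha)) with (Ropp 1) by (field; lra).
    rewrite Rpower_Ropp, Rpower_1 by auto. field; lra. }
  assert (Hkk : Rpower s (alpha/2) * k = 1).
  { unfold k. rewrite Rpower_Ropp. field. apply Rgt_not_eq, Rpower_pos. }
  destruct (Iint_props alpha s Ha Hs) as [_ H2].
  assert (Iint alpha s <= k * 1024).
  { apply H2. intros b Hb. rewrite (scale_int alpha s k b) by (auto; lra).
    apply Rmult_le_compat_l. lra.
    apply Rle_trans with (RInt (fun y => exp (- rpow y (2/alpha))) 0 (b / k)).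
    + apply RInt_le. apply Rdiv_le_0_compat; lra.
      apply ex_RInt_cpt. apply Rdiv_le_0_compat; lra. apply fs_lin_cont; lra.
      apply ex_RInt_cpt. apply Rdiv_le_0_compat; lra. intros; apply e_cont; lra.
      intros x Hx. unfold fs. rewrite rpow_scale by lra.
      replace (- s * (Rpower k (2 / alpha) * rpow x (2 / alpha))) with (- rpow x (2/alpha))
        by (rewrite <- Rmult_assoc, <- Ropp_mult_distr_l, Hsk; ring).
      unfold Rdiv. apply Rle_trans with (exp (- rpow x (2/alpha)) * 1); [|lra]. apply Rmult_le_compat_l.
      left; apply exp_pos. rewrite <- Rinv_1. apply Rinv_le_contravar. lra. nra.
    + apply int_e_bound; auto. apply Rdiv_le_0_compat; lra. }
  assert (0 < Rpower s (alpha/2)) by apply Rpower_pos.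
  apply Rle_trans with (Rpower s (alpha/2) * (k * 1024)).
  apply Rmult_le_compat_l; lra. rewrite <- Rmult_assoc, Hkk. lra.
Qed.
Definition rr beta a L := L * Rpower (L + a) (- beta).

Lemma rr_exp beta a L : 0 < a -> 0 < L -> rr beta a L = exp (ln L - beta * ln (L + a)).
Proof.
  intros. unfold rr, Rpower. rewrite <- (exp_ln L) at 1 by auto.
  rewrite <- exp_plus. f_equal. ring.
Qed.

Lemma kmvt beta a L L' : 0 < a -> 0 < L < L' ->
  exists c, L < c < L' /\
  (ln L' - beta * ln (L' + a)) - (ln L - beta * ln (L + a)) = (/c - beta * / (c + a)) * (L' - L).
Proof.
  intros Ha HL.
  destruct (MVT_cor2 (fun z => ln z - beta * ln (z + a)) (fun z => /z - beta * /(z + a)) L L')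
    as [c [Hc1 Hc2]]; [lra| |].
  - intros c Hc. apply derivable_pt_lim_minus.
    apply derivable_pt_lim_ln; lra.
    replace (beta * / (c + a)) with (beta * (/ (c+a) * (1 + 0))) by ring.
    apply derivable_pt_lim_scal.
    apply (derivable_pt_lim_comp (fun z => z + a) ln).
    apply derivable_pt_lim_plus. apply derivable_pt_lim_id. apply derivable_pt_lim_const.
    apply derivable_pt_lim_ln; lra.
  - exists c. split; auto.
Qed.

Lemma rr_inc beta a L L' : 1 < beta -> 0 < a -> 0 <= L < L' -> L' <= a / (beta - 1) ->
  rr beta a L < rr beta a L'.
Proof.
  intros Hb Ha HL HL'.
  destruct (Req_dec L 0) as [E|E].
  - subst. unfold rr. rewrite Rmult_0_l. apply Rmult_lt_0_compat. lra. apply Rpower_pos.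
  - rewrite !rr_exp by lra. apply exp_increasing.
    destruct (kmvt beta a L L' Ha) as [c [Hc Heq]]; [lra|].
    assert (0 < /c - beta * /(c + a)).
    { replace (/c - beta * /(c+a)) with ((a - (beta - 1) * c) / (c * (c + a))) by (field; lra).
      apply Rdiv_lt_0_compat; [|nra].
      assert (c < a / (beta - 1)) by lra.
      apply (Rmult_lt_compat_l (beta - 1)) in H; [|lra].
      field_simplify in H; lra. }
    nra.
Qed.

Lemma rr_dec beta a L L' : 1 < beta -> 0 < a -> a / (beta - 1) <= L -> L < L' ->
  rr beta a L' < rr beta a L.
Proof.
  intros Hb Ha HL HL'.
  assert (0 < a / (beta - 1)) by (apply Rdiv_lt_0_compat; lra).
  rewrite !rr_exp by lra. apply exp_increasing.
  destruct (kmvt beta a L L' Ha) as [c [Hc Heq]]; [lra|].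
  assert (/c - beta * /(c + a) < 0).
  { replace (/c - beta * /(c+a)) with ((a - (beta - 1) * c) / (c * (c + a))) by (field; lra).
    assert (Hc2 : a / (beta - 1) < c) by lra.
    apply (Rmult_lt_compat_l (beta - 1)) in Hc2; [|lra].
    field_simplify in Hc2; [|lra].
    unfold Rdiv. apply Rmult_neg_pos; [lra|]. apply Rinv_0_lt_compat. nra. }
  nra.
Qed.

Definition phi alpha s := Rpower s (alpha/2) * Iint alpha s.

Lemma pay_eq alpha a L : 0 < a -> 0 <= L ->
  L * Iint alpha (a + L) = rr (alpha/2) a L * phi alpha (a + L).
Proof.
  intros. unfold rr, phi. rewrite Rpower_Ropp. rewrite (Rplus_comm L a).
  field. apply Rgt_not_eq, Rpower_pos.
Qed.

Lemma phi_pos alpha s : 2 < alpha < 4 -> 0 < s -> 0 < phi alpha s.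
Proof. intros. unfold phi. apply Rmult_lt_0_compat. apply Rpower_pos. apply Iint_pos; auto. Qed.

Lemma rr_ge0 beta a L : 0 <= L -> 0 <= rr beta a L.
Proof. intros. unfold rr. apply Rmult_le_pos; auto. left; apply Rpower_pos. Qed.

Lemma h_inc alpha a L L' : 2 < alpha < 4 -> 0 < a -> 0 <= L < L' -> L' <= a / (alpha/2 - 1) ->
  L * Iint alpha (a + L) < L' * Iint alpha (a + L').
Proof.
  intros Ha Ha0 HL HL'.
  rewrite !pay_eq by lra.
  apply Rle_lt_trans with (rr (alpha/2) a L * phi alpha (a + L')).
  - apply Rmult_le_compat_l. apply rr_ge0; lra. apply phi_mono; lra.
  - apply Rmult_lt_compat_r. apply phi_pos; lra. apply rr_inc; lra.
Qed.

Lemma BR alpha a N z : 2 < alpha < 4 -> 0 < a -> 0 <= z <= N ->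
  (forall L, 0 <= L <= N -> L * Iint alpha (a + L) <= z * Iint alpha (a + z)) ->
  Rmin N (a / (alpha/2 - 1)) <= z.
Proof.
  intros Ha Ha0 Hz H.
  apply Rnot_lt_le. intro Hlt.
  set (L' := Rmin N (a / (alpha/2 - 1))) in *.
  assert (L' <= N) by apply Rmin_l.
  assert (L' <= a / (alpha/2 - 1)) by apply Rmin_r.
  assert (HH1 := H L' ltac:(lra)).
  assert (HH2 := h_inc alpha a z L' Ha Ha0 ltac:(lra) ltac:(lra)). lra.
Qed.
Lemma rr_scale beta a v : 0 < a -> 0 <= v -> rr beta a (v * a) = a * Rpower a (- beta) * rr beta 1 v.
Proof.
  intros. unfold rr. replace (v * a + a) with (a * (v + 1)) by ring.
  rewrite <- Rpower_mult_distr by lra. ring.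
Qed.

Theorem theorem7 (alpha c : R) (E : R -> R * R) :
  2 < alpha < 4 -> 1 <= c ->
  (forall N1, 0 < N1 -> is_Nash alpha N1 (c * N1) (fst (E N1)) (snd (E N1))) ->
  Rbar_locally p_infty (fun N1 => fst (E N1) = N1) /\
  is_lim (fun N1 => snd (E N1) / N1) p_infty (Rmin c (2 / (alpha - 2))).
Proof.
  intros Ha Hc HE.
  set (u := 2 / (alpha - 2)).
  assert (Hu1 : 1 < u). { unfold u. apply (Rmult_lt_reg_r (alpha - 2)). lra. field_simplify; lra. }
  assert (Hau : forall a, a / (alpha/2 - 1) = a * u). { intros; unfold u; field; lra. }
  assert (key : forall N1, 0 < N1 -> fst (E N1) = N1 /\ Rmin (c * N1) (N1 * u) <= snd (E N1)
             /\ snd (E N1) <= c * N1 /\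
             (forall L, 0 <= L <= c * N1 -> L * Iint alpha (N1 + L) <= snd (E N1) * Iint alpha (N1 + snd (E N1)))).
  { intros N1 HN1. destruct (HE N1 HN1) as [[Hx Hy] [P1 P2]].
    set (x := fst (E N1)) in *. set (y := snd (E N1)) in *.
    unfold U1, U2 in *.
    assert (Hy0 : 0 < y).
    { destruct (Req_dec y 0) as [E0|E0]; [|lra].
      exfalso. assert (H := P2 (c * N1) ltac:(nra)). rewrite E0, Rmult_0_l in H.
      assert (0 < c * N1 * Iint alpha (x + c * N1)).
      { apply Rmult_lt_0_compat. nra. apply Iint_pos; nra. } lra. }
    assert (Hx0 : 0 < x).
    { destruct (Req_dec x 0) as [E0|E0]; [|lra].
      exfalso. assert (H := P1 N1 ltac:(lra)). rewrite E0, Rmult_0_l in H.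
      assert (0 < N1 * Iint alpha (N1 + y)).
      { apply Rmult_lt_0_compat. nra. apply Iint_pos; nra. } lra. }
    assert (B2 := BR alpha x (c * N1) y Ha Hx0 Hy P2). rewrite Hau in B2.
    assert (B1 : Rmin N1 (y / (alpha/2 - 1)) <= x).
    { apply BR; auto. intros L HL. rewrite (Rplus_comm y L), (Rplus_comm y x). auto. }
    rewrite Hau in B1.
    assert (Hxe : x = N1).
    { destruct (Rle_lt_dec N1 (y * u)) as [H1|H1].
      - rewrite Rmin_left in B1 by lra. lra.
      - rewrite Rmin_right in B1 by lra. exfalso.
        destruct (Rle_lt_dec (c * N1) (x * u)) as [H2|H2].
        + rewrite Rmin_left in B2 by lra. nra.
        + rewrite Rmin_right in B2 by lra. nra. }
    split; auto. split. rewrite Hxe in B2. exact B2. split. lra.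
    rewrite Hxe in P2. exact P2. }
  split.
  { exists 0. intros N1 HN1. apply key; auto. }
  apply is_lim_spec. intros eps. simpl.
  destruct (Rle_lt_dec c u) as [Hcu|Hcu].
  - exists 0. intros N1 HN1. destruct (key N1 HN1) as [_ [K1 [K2 _]]].
    rewrite Rmin_left in K1 by nra. rewrite Rmin_left by lra.
    replace (snd (E N1) / N1) with c by (field_simplify_eq; nra).
    rewrite Rminus_diag, Rabs_R0. apply cond_pos.
  - rewrite Rmin_right by lra.
    set (ep := eps / 2).
    assert (Hep : 0 < ep) by (unfold ep; destruct eps; simpl; lra).
    set (beta := alpha / 2).
    assert (Hb1 : 1 < beta) by (unfold beta; lra).
    assert (Hub : 1 / (beta - 1) = u) by (unfold beta, u; field; lra).
    set (g := rr beta 1).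
    assert (Hg0 : 0 < g u).
    { unfold g, rr. apply Rmult_lt_0_compat. lra. apply Rpower_pos. }
    assert (Hgd : g (u + ep) < g u).
    { unfold g. apply rr_dec; auto; lra. }
    set (rho := g (u + ep) / g u).
    assert (Hrho : rho < 1). { unfold rho. apply (Rmult_lt_reg_r (g u)); auto. field_simplify; lra. }
    assert (Hrho0 : 0 <= rho). { unfold rho. apply Rdiv_le_0_compat; [|lra]. unfold g. apply rr_ge0. lra. }
    set (S := fun z => exists s, 0 < s /\ z = phi alpha s).
    assert (HSb : bound S). { exists 1024. intros z [s [Hs ->]]. apply phi_bound; auto. }
    assert (HS1 : exists z, S z). { exists (phi alpha 1). exists 1; split; auto; lra. }
    destruct (completeness S HSb HS1) as [G [HGub HGlub]].
    assert (HG0 : 0 < G).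
    { apply Rlt_le_trans with (phi alpha 1). apply phi_pos; lra. apply HGub. exists 1; split; auto; lra. }
    assert (Hs0 : exists s0, 0 < s0 /\ rho * G < phi alpha s0).
    { apply NNPP; intro Hn.
      assert (is_upper_bound S (rho * G)).
      { intros z [s [Hs ->]]. apply Rnot_lt_le. intro Hlt. apply Hn. exists s; auto. }
      specialize (HGlub _ H). nra. }
    destruct Hs0 as [s0 [Hs0 Hs0']].
    exists s0. intros N1 HN1.
    assert (HN1p : 0 < N1) by lra.
    destruct (key N1 HN1p) as [_ [K1 [K2 K3]]].
    rewrite Rmin_right in K1 by nra.
    set (y := snd (E N1)) in *.
    assert (Hylt : y < (u + ep) * N1).
    { apply Rnot_le_lt. intro Hge.
      assert (HK := K3 (u * N1) ltac:(split; nra)).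
      rewrite !pay_eq in HK by nra.
      fold beta in HK.
      assert (Hphi1 : phi alpha (N1 + y) <= G). { apply HGub. exists (N1 + y). split; auto; nra. }
      assert (Hphi2 : phi alpha s0 <= phi alpha (N1 + u * N1)). { unfold phi. apply phi_mono; nra. }
      assert (Hr1 : rr beta N1 y <= rr beta N1 ((u + ep) * N1)).
      { destruct (Req_dec y ((u + ep) * N1)) as [E1|E1]. rewrite E1; lra.
        left. apply rr_dec; auto. replace (N1 / (beta - 1)) with (u * N1) by (rewrite <- Hub; field; lra).
        nra. lra. }
      rewrite !rr_scale in Hr1, HK by nra.
      set (K := N1 * Rpower N1 (- beta)) in *.
      assert (HK0 : 0 < K) by (apply Rmult_lt_0_compat; [lra | apply Rpower_pos]).
      fold g in Hr1, HK.
      assert (Hgu : g (u + ep) = rho * g u) by (unfold rho; field; lra).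
      assert (HphiN : 0 < phi alpha (N1 + y)) by (apply phi_pos; nra).
      assert (Hry : 0 <= rr beta N1 y) by (apply rr_ge0; nra).
      assert (HA : 0 < K * g u) by (apply Rmult_lt_0_compat; auto).
      assert (T1 : K * g u * phi alpha s0 <= K * g u * phi alpha (N1 + u * N1)) by (apply Rmult_le_compat_l; lra).
      assert (T2 : K * g u * (rho * G) < K * g u * phi alpha s0) by (apply Rmult_lt_compat_l; lra).
      assert (T3 : rr beta N1 y * phi alpha (N1 + y) <= rr beta N1 y * G) by (apply Rmult_le_compat_l; lra).
      assert (T4 : rr beta N1 y * G <= K * g (u + ep) * G) by (apply Rmult_le_compat_r; lra).
      assert (T5 : K * g (u + ep) * G = K * g u * (rho * G)) by (rewrite Hgu; ring).
      lra. }
    apply Rabs_def1.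
      * apply (Rmult_lt_reg_r N1); auto. unfold Rminus. rewrite Rmult_plus_distr_r.
        replace (y / N1 * N1) with y by (field; lra). unfold ep in Hylt. destruct eps as [e He]; simpl in *. nra.
      * apply (Rmult_lt_reg_r N1); auto. unfold Rminus. rewrite Rmult_plus_distr_r.
        replace (y / N1 * N1) with y by (field; lra). destruct eps as [e He]; simpl in *. nra.
Qed.
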